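(* Let $\lambda\in P$ with $\sharp^{(k,r)}(\lambda)\le1$. Then there is no $\mu\in P$, $\mu\ne\lambda$, with $t^{\rho(\mu)_i}q^{\mu_i}=t^{\rho(\lambda)_i}q^{\lambda_i}$ for all $i$ at the specialization $(\ast)$.
   Context: Let $P=\mathbb Z^n$. For $\lambda\in P$, $\rho(\lambda)$ is the unique permutation of $(\frac{n-1}2,\dots,-\frac{n-1}2)$ with $\rho(\lambda)_i>\rho(\lambda)_j$ iff $\lambda_i>\lambda_j$ or ($\lambda_i=\lambda_j$, $i<j$). Fix $1\le k\le n-1$, $r\ge2$, $g=\gcd(k+1,r-1)$, $\tau=e^{2\pi\sqrt{-1}/(r-1)}$, specialization $(\ast)$: $t=u^{(r-1)/g}$, $q=\tau u^{-(k+1)/g}$ (so $t^{k+1}q^{r-1}=1$). $u_\lambda(f)=f(t^{-\rho(\lambda)_1}q^{-\lambda_1},\dots,t^{-\rho(\lambda)_n}q^{-\lambda_n})$. A wheel in $\lambda$ is a tuple $(i_1,\dots,i_{k+1})$ of distinct indices such that, at $(\ast)$, $u_\lambda(x_{i_{a+1}})=u_\lambda(x_{i_a})tq^{s_a}$ ($1\le a\le k$) for some $s_a\in\mathbb Z_{\ge0}$ with $\sum s_a\le r-2$ and $i_a<i_{a+1}$ whenever $s_a=0$. Wheels that are cyclic rotations of each other are identified; $\sharp^{(k,r)}(\lambda)$ is the number of classes of wheels in $\lambda$. *)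

(* Defs.v *)
From HB Require Import structures.
From mathcomp Require Import all_boot all_order all_algebra.
From mathcomp Require Import algC.
From mathcomp Require Import boolp.
Set Implicit Arguments. Unset Strict Implicit. Unset Printing Implicit Defensive.
Import Order.TTheory GRing.Theory Num.Theory.
Local Open Scope ring_scope.

Definition weight (n : nat) := {ffun 'I_n -> int}.

Definition rho_prec {n : nat} (lam : weight n) (j i : 'I_n) : bool :=
  (lam i < lam j) || ((lam j == lam i) && (j < i)%N).

(* rho(lambda)_i : the entry of ((n-1)/2, ..., -(n-1)/2) in position
   (number of indices preceding i); this is the unique permutation with
   rho_i > rho_j iff lambda_i > lambda_j or (lambda_i = lambda_j and i < j). *)
Definition rho {n : nat} (lam : weight n) (i : 'I_n) : rat :=
  ((n%:R - 1) / 2) - (#|[set j | rho_prec lam j i]|)%:R.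

(* Monomials c * u^e in the formal variable u (c nonzero complex algebraic,
   e rational exponent), multiplied componentwise. *)
Definition mon := (algC * rat)%type.
Definition mmul (x y : mon) : mon := (x.1 * y.1, x.2 + y.2).

Definition gk (k r : nat) : nat := gcdn k.+1 r.-1.

(* tau = exp(2 pi i/(r-1)) : the square of the (r-1)-th root of -1 with minimal
   nonnegative argument (= exp(i pi/(r-1))). *)
Definition tau (r : nat) : algC := ((r.-1).-root (-1 : algC)) ^+ 2.

(* specialization (star): t = u^((r-1)/g), q = tau * u^(-(k+1)/g) *)
Definition t_pow (k r : nat) (a : rat) : mon :=
  (1, a * ((r.-1)%:R / (gk k r)%:R)).
Definition q_pow (k r : nat) (b : int) : mon :=
  (tau r ^ b, - (b%:~R : rat) * ((k.+1)%:R / (gk k r)%:R)).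
Definition tq (k r : nat) (a : rat) (b : int) : mon := mmul (t_pow k r a) (q_pow k r b).

Definition u_lam (k r : nat) {n : nat} (lam : weight n) (i : 'I_n) : mon :=
  tq k r (- rho lam i) (- lam i).

(* A wheel (i_1, ..., i_{k+1}), encoded as a (k+1)-tuple (0-based positions). *)
Definition is_wheel {k : nat} (r : nat) {n : nat} (lam : weight n) (w : (k.+1).-tuple 'I_n) : Prop :=
  uniq w /\
  exists s : 'I_k -> nat,
    (\sum_(a < k) s a <= r - 2)%N /\
    forall a : 'I_k,
      let cur := tnth w (widen_ord (leqnSn k) a) in
      let nxt := tnth w (lift ord0 a) in
      u_lam k r lam nxt =
        mmul (mmul (u_lam k r lam cur) (t_pow k r 1)) (q_pow k r (s a)%:Z)
      /\ (s a = 0%N -> (cur < nxt)%N).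

Definition wheels (k r : nat) {n : nat} (lam : weight n) : {set (k.+1).-tuple 'I_n} :=
  [set w | `[< @is_wheel k r n lam w >]].

Definition rot_rel {k : nat} {n : nat} (w w' : (k.+1).-tuple 'I_n) : bool :=
  [exists m : 'I_(k.+1), val w' == rot m (val w)].

Definition sharp (k r : nat) {n : nat} (lam : weight n) : nat :=
  #| [set [set w' in wheels k r lam | rot_rel w w'] | w in wheels k r lam] |.

(* Main.v *)
Require Import Defs.
From HB Require Import structures.
From mathcomp Require Import all_boot all_order all_algebra.
From mathcomp Require Import algC cyclotomic.
From mathcomp Require Import boolp.
From mathcomp Require Import zify ring lra.
Import Order.TTheory GRing.Theory Num.Theory.
Set Implicit Arguments. Unset Strict Implicit. Unset Printing Implicit Defensive.
Local Open Scope ring_scope.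
Definition lt2 (V1 : int) (i1 : nat) (V2 : int) (i2 : nat) : bool :=
  (V2 < V1) || ((V1 == V2) && (i1 < i2)%N).
Lemma lt2P V1 i1 V2 i2 : lt2 V1 i1 V2 i2 <-> ((V2 < V1) \/ (V1 = V2 /\ (i1 < i2)%N)).
Proof. rewrite /lt2; split. case/orP; [by left|]. by case/andP=> /eqP -> ?; right.
case=> [->//|[-> ->]]; by rewrite eqxx orbT. Qed.
Lemma lt2_irr V i : lt2 V i V i = false.
Proof. apply/negP => /lt2P; lia. Qed.
Lemma lt2_trans a i b j c l : lt2 a i b j -> lt2 b j c l -> lt2 a i c l.
Proof. move=> /lt2P H1 /lt2P H2; apply/lt2P; lia. Qed.
Lemma lt2_total a i b j : i <> j -> lt2 a i b j \/ lt2 b j a i.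
Proof. move=> H; rewrite !lt2P; lia. Qed.
Lemma lt2_asym a i b j : lt2 a i b j -> ~ lt2 b j a i.
Proof. move=> /lt2P H1 /lt2P H2; lia. Qed.
Lemma lt2_shift a i b j c : lt2 (a + c) i (b + c) j = lt2 a i b j.
Proof. apply/idP/idP => /lt2P H; apply/lt2P; lia. Qed.

Section Pos.
Variable n : nat.
Implicit Types nu : weight n.
Definition pos nu (i : 'I_n) : nat := #|[set j | rho_prec nu j i]|.
Lemma rho_precE nu j i : rho_prec nu j i = lt2 (nu j) j (nu i) i.
Proof. by []. Qed.

Lemma pos_lt nu j i : lt2 (nu j) j (nu i) i -> (pos nu j < pos nu i)%N.
Proof.
move=> Hji; apply: proper_card; apply/properP; split.
  apply/subsetP => l; rewrite !inE !rho_precE => Hl; exact: lt2_trans Hl Hji.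
by exists j; rewrite !inE !rho_precE ?lt2_irr.
Qed.
Lemma pos_ltn nu i : (pos nu i < n)%N.
Proof.
have -> : n = #|[set: 'I_n]| by rewrite cardsT card_ord.
apply: proper_card; apply/properP; split; first exact: subsetT.
by exists i; rewrite !inE ?rho_precE ?lt2_irr.
Qed.
Lemma pos_inj nu : injective (pos nu).
Proof.
move=> i j Hij; apply/eqP; apply/negPn/negP => /eqP Hne.
have Hne' : (i : nat) <> j by move=> /val_inj.
case: (@lt2_total (nu i) i (nu j) j Hne') => /pos_lt; rewrite Hij ltnn //.
Qed.
Lemma pos_lt_lt2 nu j i : (pos nu j < pos nu i)%N -> lt2 (nu j) j (nu i) i.
Proof.
move=> H; have Hne : (j : nat) <> i by move=> /val_inj E; rewrite E ltnn in H.
case: (@lt2_total (nu j) j (nu i) i Hne) => // /pos_lt; lia.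
Qed.
Lemma pos_le_nlt2 nu j i : (pos nu j <= pos nu i)%N -> ~ lt2 (nu i) i (nu j) j.
Proof. move=> H /pos_lt; lia. Qed.
Lemma pos_surj nu h : (h < n)%N -> exists i, pos nu i = h.
Proof.
move=> Hh; pose f (i : 'I_n) : 'I_n := Ordinal (pos_ltn nu i).
have finj : injective f by move=> i j /(congr1 val) /= /pos_inj.
have [g fg gf] := injF_bij finj.
by exists (g (Ordinal Hh)); have := gf (Ordinal Hh); move/(congr1 val).
Qed.
End Pos.
Section KeyE.
Variable n : nat.
Variables (nu : weight n) (N k : nat).

Definition Win (P : nat) : Prop := exists a b : 'I_n,
  (pos nu a + k = P)%N /\ pos nu b = P /\ lt2 (nu b + N%:Z) b (nu a) a.

Lemma lt2_pos_mono x i (a a' : 'I_n) : (pos nu a <= pos nu a')%N ->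
  lt2 x i (nu a) a -> lt2 x i (nu a') a'.
Proof.
rewrite leq_eqVlt => /orP [/eqP/pos_inj -> //| /pos_lt_lt2 H1 H2].
exact: lt2_trans H2 H1.
Qed.

Lemma TwoW (a b : 'I_n) : (pos nu a + k + 1 <= pos nu b)%N ->
  lt2 (nu b + N%:Z) b (nu a) a -> Win (pos nu b) /\ Win (pos nu b - 1).
Proof.
move=> Hab Hlt.
have [a' Ha'] : exists a', pos nu a' = (pos nu b - k)%N.
  apply: pos_surj; have := pos_ltn nu b; lia.
have [b' Hb'] : exists b', pos nu b' = (pos nu b - 1)%N.
  apply: pos_surj; have := pos_ltn nu b; lia.
have [a'' Ha''] : exists a'', pos nu a'' = (pos nu b - 1 - k)%N.
  apply: pos_surj; have := pos_ltn nu b; lia.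
split.
  exists a', b; split; [lia| split=> //].
  apply: lt2_pos_mono Hlt; lia.
exists a'', b'; split; [lia| split=> //].
have Hbb : lt2 (nu b' + N%:Z) b' (nu b + N%:Z) b.
  rewrite lt2_shift; apply: pos_lt_lt2; lia.
apply: lt2_pos_mono (lt2_trans Hbb Hlt); lia.
Qed.

Lemma card_le_interval (D : {set 'I_n}) lo hi :
  (forall j, j \in D -> lo <= pos nu j <= hi)%N -> (#|D| <= hi.+1 - lo)%N.
Proof.
move=> HD; rewrite cardE -(size_map (pos nu)) -(size_iota lo (hi.+1 - lo)).
apply: uniq_leq_size; first by rewrite map_inj_uniq ?enum_uniq //; exact: pos_inj.
move=> x /mapP [j]; rewrite mem_enum => /HD Hj ->; rewrite mem_iota; lia.
Qed.

Hypothesis OneWin : forall P1 P2, Win P1 -> Win P2 -> P1 = P2.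

Definition cnt (i : 'I_n) (V : int) := #|[set j | lt2 (nu j) j V i]|.

Lemma cnt_split (i : 'I_n) V : (cnt i V = cnt i (V + N%:Z) +
  #|[set j | lt2 (nu j) j V i] :\: [set j | lt2 (nu j) j (V + N%:Z) i]|)%N.
Proof.
rewrite cardsD /cnt.
have -> : [set j | lt2 (nu j) j V i] :&: [set j | lt2 (nu j) j (V + N%:Z) i]
   = [set j | lt2 (nu j) j (V + N%:Z) i].
  apply/setP => j; rewrite !inE; apply/andP/idP => [[]//| H]; split=> //.
  by move: H => /lt2P H; apply/lt2P; lia.
have : (#|[set j | lt2 (nu j) j (V + N%:Z) i]| <= #|[set j | lt2 (nu j) j V i]|)%N.
  apply: subset_leq_card; apply/subsetP => j; rewrite !inE => /lt2P H; apply/lt2P; lia.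
lia.
Qed.

Lemma E2 (i : 'I_n) V : (cnt i V <= cnt i (V + N%:Z) + k + 1)%N.
Proof.
rewrite cnt_split; set D := _ :\: _.
rewrite -addnA leq_add2l leqNgt; apply/negP => HD.
have [j0 Hj0] : exists j0, j0 \in D.
  by apply/set0Pn; rewrite -card_gt0; lia.
case: (arg_minnP (pos nu) Hj0) => a Ha Hmin.
case: (arg_maxnP (pos nu) Hj0) => b Hb Hmax.
have Hcard := @card_le_interval D (pos nu a) (pos nu b)
  (fun j Hj => introT andP (conj (Hmin j Hj) (Hmax j Hj))).
have Ha3 : a \in D by []. have Hb3 : b \in D by [].
move: Ha3 Hb3; rewrite !inE => /andP [Ha2 Ha1] /andP [Hb2 Hb1].
have Hpb := leq_trans HD Hcard.
have [W1 W2] : Win (pos nu b) /\ Win (pos nu b - 1).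
  apply: (@TwoW a b); first by lia.
  move/lt2P: Hb1 => Hb1.
  move: Ha2 => /negP Ha2.
  apply/lt2P.
  have Ha2' : ~ (V + N%:Z < nu a \/ nu a = V + N%:Z /\ (a < i)%N) by move=> H; apply: Ha2; apply/lt2P.
  lia.
have := OneWin W1 W2; have := pos_ltn nu b; lia.
Qed.

Lemma E1 (i : 'I_n) : (0 < N)%N -> (pos nu i <= cnt i (nu i + N%:Z) + k)%N.
Proof.
move=> HN.
have Hsp := cnt_split i (nu i).
have Hpc : cnt i (nu i) = pos nu i by [].
move: Hsp; rewrite Hpc; set D := _ :\: _ => ->.
rewrite leq_add2l leqNgt; apply/negP => HD.
have [j0 Hj0] : exists j0, j0 \in D.
  by apply/set0Pn; rewrite -card_gt0; lia.
case: (arg_minnP (pos nu) Hj0) => a Ha Hmin.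
have Hin : forall j, j \in D -> (pos nu a <= pos nu j <= (pos nu i).-1)%N.
  move=> j Hj; rewrite Hmin //=; move: Hj; rewrite !inE => /andP [_ /pos_lt]; lia.
have Hcard := card_le_interval Hin.
have Ha3 : a \in D by [].
move: Ha3; rewrite !inE => /andP [Ha2 Ha1].
have Hpi : (0 < pos nu i)%N by move: (pos_lt Ha1); lia.
have Hpb := leq_trans HD Hcard.
have [W1 W2] : Win (pos nu i) /\ Win (pos nu i - 1).
  apply: (@TwoW a i); first by lia.
  move/lt2P: Ha1 => Ha1.
  move: Ha2 => /negP Ha2.
  apply/lt2P.
  have Ha2' : ~ (nu i + N%:Z < nu a \/ nu a = nu i + N%:Z /\ (a < i)%N) by move=> H; apply: Ha2; apply/lt2P.
  have Hai : (a:nat) <> i by move=> /val_inj E; subst; lia.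
  lia.
have := OneWin W1 W2; lia.
Qed.

Lemma keyE (i : 'I_n) c : (0 < N)%N ->
  (pos nu i + 1 <= cnt i (nu i + N%:Z *+ c.+1) + c.+1 * k.+1)%N.
Proof.
move=> HN; elim: c => [|c IH].
  by rewrite mulr1n; have := E1 i HN; lia.
have := E2 i (nu i + N%:Z *+ c.+1); rewrite -addrA -mulrSr; move: IH; rewrite !mulSn; set X := cnt _ _; set Y := cnt _ _; lia.
Qed.
End KeyE.
Definition OneWin n (nu : weight n) N k :=
  forall P1 P2, Win nu N k P1 -> Win nu N k P2 -> P1 = P2.

Lemma case_helper n (A B : weight n) N k (i0 : 'I_n) c : (0 < N)%N ->
  OneWin A N k -> B i0 = A i0 + N%:Z *+ c.+1 ->
  pos A i0 = (pos B i0 + c.+1 * k.+1)%N ->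
  (forall j, lt2 (A j) j (B i0) i0 -> lt2 (B j) j (B i0) i0) -> False.
Proof.
move=> HN HW HB HP Hsub.
have := keyE HW i0 c HN; rewrite -HB HP.
have : (cnt A i0 (B i0) <= pos B i0)%N.
  apply: subset_leq_card; apply/subsetP => j; rewrite !inE; exact: Hsub.
set X := cnt _ _ _; lia.
Qed.

Lemma mulzn (c : nat) (x : int) : (c%:Z) * x = x *+ c.
Proof. by rewrite -[in RHS](mulr1 x) -mulrnAr mulrC natz. Qed.

Lemma partF n (lam mu : weight n) N k (m : 'I_n -> int) : (0 < N)%N ->
  (forall i, mu i = lam i + m i * N%:Z) ->
  (forall i, (pos lam i)%:Z = (pos mu i)%:Z + m i * (k.+1)%:Z) ->
  OneWin lam N k -> OneWin mu N k -> forall i, m i = 0.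
Proof.
move=> HN Hmu Hpos HWl HWm.
suff Hsuff : ~ exists i, m i <> 0.
  by move=> i; apply/eqP/negPn/negP => /eqP Hne; apply: Hsuff; exists i.
case=> i1 Hi1.
pose e (i : 'I_n) : int := if 0 < m i then mu i else lam i.
pose S := [pred i : 'I_n | m i != 0].
pose key (i : 'I_n) := #|[set j | S j && lt2 (e j) j (e i) i]|.
have Si1 : S i1 by rewrite /S /= ; apply/eqP.
case: (arg_minnP key Si1) => i0 Si0 Hmin.
have Hnone : forall j, S j -> ~ lt2 (e j) j (e i0) i0.
  move=> j Sj Hj.
  have Hlt : (key j < key i0)%N.
    apply: proper_card; apply/properP; split.
      apply/subsetP => l; rewrite !inE => /andP [Sl Hl]; apply/andP; split => //.
      exact: lt2_trans Hl Hj.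
    by exists j; rewrite inE; [apply/andP | rewrite lt2_irr andbF].
  have := Hmin j Sj; lia.
have Hm0 : m i0 != 0 by [].
case: (ltrP 0 (m i0)) => Hsg.
  have [c Hc] : exists c : nat, m i0 = (c.+1)%:Z.
    by exists (`|m i0|.-1)%N; lia.
  apply: (@case_helper n lam mu N k i0 c HN HWl).
  - by rewrite Hmu Hc mulzn.
  - have := Hpos i0; rewrite Hc; lia.
  - move=> j Hj.
    have He0 : e i0 = mu i0 by rewrite /e Hsg.
    case: (ltrgtP 0 (m j)) => Hmj.
    + apply: lt2_trans Hj; apply/lt2P; left; rewrite Hmu; nia.
    + exfalso; apply: (Hnone j); first by rewrite /S /= lt_eqF.
      by rewrite He0 /e ltNge (ltW Hmj).
    + by rewrite Hmu -Hmj mul0r addr0.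
have Hneg : m i0 < 0 by rewrite lt_neqAle Hm0 Hsg.
have [c Hc] : exists c : nat, m i0 = - (c.+1)%:Z.
  by exists (`|m i0|.-1)%N; lia.
apply: (@case_helper n mu lam N k i0 c HN HWm).
- rewrite Hmu Hc; rewrite mulNr mulzn; ring.
- have := Hpos i0; rewrite Hc; lia.
- move=> j Hj.
  have He0 : e i0 = lam i0 by rewrite /e ltNge (ltW Hneg).
  case: (ltrgtP 0 (m j)) => Hmj.
  + exfalso; apply: (Hnone j); first by rewrite /S /= gt_eqF.
    by rewrite He0 /e Hmj.
  + apply: lt2_trans Hj; apply/lt2P; left; rewrite Hmu; nia.
  + by move: Hj; rewrite Hmu -Hmj mul0r addr0.
Qed.
Lemma unit_of_pow (y : algC) N : (0 < N)%N -> y ^+ N = -1 -> `|y| = 1.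
Proof.
move=> HN Hy; apply/eqP; rewrite -(pexpr_eq1 HN) ?normr_ge0 //.
by rewrite -normrX Hy normrN1.
Qed.

Lemma norm1Re (y : algC) : `|y| = 1 -> `|1 - y| ^+ 2 = 2 - 2 * 'Re y.
Proof.
move=> Hy; have := normC2_Re_Im y; rewrite Hy expr1n => H1.
rewrite normC2_Re_Im raddfB /= raddfB /=.
have -> : 'Re (1 : algC) = 1 by apply/Creal_ReP; exact: rpred1.
have -> : 'Im (1 : algC) = 0 by apply/Creal_ImP; exact: rpred1.
move: H1; set a := 'Re y; set b := 'Im y => H1.
rewrite -[2 in RHS]/(1 + 1) [X in _ = X + 1 - _]H1. ring.
Qed.

Lemma rootN1_max N : (1 < N)%N -> forall y : algC, y ^+ N = -1 ->
  'Re y <= 'Re (N.-root (-1)).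
Proof.
move=> HN y Hy.
have /orP [H|H] : (0 <= 'Im y) || ('Im y <= 0) by rewrite real_leVge ?Creal_Im ?rpred0.
  by apply: rootC_Re_max => //; lia.
rewrite -Re_conj; apply: rootC_Re_max; first by lia.
  by rewrite -rmorphXn Hy rmorphN1.
by rewrite Im_conj oppr_ge0.
Qed.
Lemma N1_neq1 : (-1 : algC) != 1.
Proof. rewrite -subr_eq0 -opprD oppr_eq0. have ->: (1 + 1 : algC) = 2%:R by []. by rewrite pnatr_eq0. Qed.

Lemma geom_sum0 (x : algC) p : x ^+ p = 1 -> x != 1 -> \sum_(t < p) x ^+ t = 0.
Proof.
move=> Hp Hx; have := subrX1 x p; rewrite Hp subrr => /esym /eqP.
by rewrite mulf_eq0 subr_eq0 (negbTE Hx) => /eqP.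
Qed.

Lemma Re_le_norm (x : algC) : 'Re x <= `|x|.
Proof.
apply: le_trans (real_ler_norm (Creal_Re x)) _.
by have := leif_normC_Re_Creal x => /leifP; case: ifP => [_ /eqP -> //| _ /ltW].
Qed.

Lemma prim_rootN1 N j : (0 < N)%N -> ((N.-root (-1 : algC)) ^+ 2) ^+ j = 1 -> (N %| j)%N.
Proof.
move=> HN Hj.
set z := N.-root (-1 : algC).
have Hz : z ^+ N = -1 by rewrite /z rootCK.
set w := z ^+ 2.
have HwN : w ^+ N = 1 by rewrite -exprM mulnC exprM Hz expr2 mulrNN mulr1.
have [o Hprim HoN] := prim_order_exists HN HwN.
have Hoj : (o %| j)%N by rewrite (prim_order_dvd Hprim) Hj.
have Ho0 : (0 < o)%N := prim_order_gt0 Hprim.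
case: (eqVneq o N) => [<- //| HoN'].
exfalso.
have HoltN : (o < N)%N by have := dvdn_leq HN HoN; rewrite leq_eqVlt (negbTE HoN').
set p := (N %/ o)%N.
have HNp : N = (p * o)%N by rewrite divnK.
have Hp2 : (1 < p)%N by nia.
have Hzo : z ^+ o = -1.
  have H2 : (z ^+ o) ^+ 2 == 1.
    by rewrite -exprM mulnC exprM (prim_expr_order Hprim).
  rewrite sqrf_eq1 in H2; case/orP: H2 => /eqP H2 //.
  have : z ^+ N = 1 by rewrite HNp mulnC exprM H2 expr1n.
  by rewrite Hz => /eqP; rewrite (negbTE N1_neq1).
pose y0 := p.-root z.
have Hy0 : y0 ^+ p = z by rewrite /y0 rootCK //; lia.
have [eta Heta] := C_prim_root_exists (ltnW Hp2).
pose yt (t : nat) := y0 * eta ^+ t.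
have Hytp : forall t, yt t ^+ p = z.
  by move=> t; rewrite exprMn Hy0 exprAC (prim_expr_order Heta) expr1n mulr1.
have HytN : forall t, yt t ^+ N = -1 by move=> t; rewrite HNp exprM Hytp Hzo.
have HN1 : (1 < N)%N by nia.
have Hre : forall t, 'Re (yt t) <= 'Re z by move=> t; exact: rootN1_max.
have Hnz : `|z| = 1 by apply: (unit_of_pow HN).
have Hnyt : forall t, `|yt t| = 1 by move=> t; apply: (unit_of_pow HN).
have Hz1 : z != 1 by apply/eqP => Hz1; move: Hz; rewrite Hz1 expr1n => /eqP; rewrite eq_sym (negbTE N1_neq1).
pose S t := \sum_(k < p) yt t ^+ k.
have HS : forall t, (1 - yt t) * S t = 1 - z.
  move=> t; have := subrX1 (yt t) p; rewrite Hytp => H.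
  by rewrite -[LHS]opprK -mulNr opprB -H opprB.
have Hpos1z : 0 < `|1 - z| by rewrite normr_gt0 subr_eq0 eq_sym.
have Hle1 : forall t, `|1 - z| <= `|1 - yt t|.
  move=> t; rewrite -(ler_pXn2r (isT : (0 < 2)%N)) ?nnegrE ?normr_ge0 //.
  rewrite !norm1Re //; rewrite lerD2l lerN2 ler_pM2l ?ltr0n //; exact: Hre.
have HSle : forall t, `|S t| <= 1.
  move=> t; have Hp' : 0 < `|1 - yt t| by apply: lt_le_trans Hpos1z (Hle1 t).
  rewrite -(ler_pM2r Hp') mul1r mulrC -normrM HS; exact: Hle1.
have Hsum : \sum_(t < p) S t = p%:R.
  rewrite /S exchange_big /= (bigD1 (Ordinal (ltnW Hp2))) //=.
  rewrite (eq_bigr (fun _ => 1)); last by move=> t _; rewrite expr0.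
  rewrite sumr_const card_ord big1 ?addr0 //.
  move=> k Hk; rewrite (eq_bigr (fun t : 'I_p => y0 ^+ k * (eta ^+ k) ^+ t)); last first.
    by move=> t _; rewrite /yt exprMn exprAC.
  rewrite -mulr_sumr geom_sum0 ?mulr0 //.
    by rewrite exprAC (prim_expr_order Heta) expr1n.
  rewrite -(prim_order_dvd Heta); apply/negP => Hd.
  have Hk0 : (k : nat) <> 0%N by move=> Hk0; move: Hk; rewrite -val_eqE /= Hk0.
  have := dvdn_leq _ Hd; have := ltn_ord k; lia.
have HRe1 : forall t : 'I_p, 'Re (S t) = 1.
  have Hz0 : \sum_(t < p) (1 - 'Re (S t)) = 0.
    have HRep : 'Re (p%:R : algC) = p%:R by apply/Creal_ReP; exact: rpred_nat.
    rewrite sumrB sumr_const card_ord -raddf_sum Hsum /= HRep.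
    by rewrite subrr.
  move=> t.
  have Hnn : forall i : 'I_p, xpredT i -> 0 <= 1 - 'Re (S i).
    by move=> i _; rewrite subr_ge0; apply: le_trans (Re_le_norm _) (HSle i).
  have H0 : 1 - 'Re (S t) = 0 by apply: (psumr_eq0P Hnn Hz0).
  by move/eqP: H0; rewrite subr_eq0 => /eqP <-.
have HS1 : forall t : 'I_p, S t = 1.
  move=> t; have H := normC2_Re_Im (S t); rewrite HRe1 expr1n in H.
  have Hn : `|S t| ^+ 2 <= 1 by rewrite exprn_ile1 ?normr_ge0.
  rewrite H -[X in _ <= X]addr0 lerD2l in Hn.
  have HIm : 'Im (S t) = 0.
    apply/eqP; rewrite -sqrf_eq0 eq_le Hn /=; exact: real_exprn_even_ge0 (Creal_Im _) _.
  by rewrite [S t]Crect HRe1 HIm mulr0 addr0.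
have Hyz : forall t : 'I_p, yt t = z.
  by move=> t; have := HS t; rewrite HS1 mulr1 => /addrI /oppr_inj.
have H0 := Hyz (Ordinal (ltnW Hp2)); have H1 := Hyz (Ordinal Hp2).
rewrite /yt /= expr0 mulr1 in H0; rewrite /yt /= expr1 H0 in H1.
have Hz00 : z != 0 by apply/eqP => Hz00; move: Hnz; rewrite Hz00 normr0 => /eqP; rewrite eq_sym oner_eq0.
have Heta1 : eta = 1 by apply: (mulfI Hz00); rewrite mulr1 H1.
have := prim_order_dvd Heta 1; rewrite Heta1 expr1n eqxx => /dvdn_leq; lia.
Qed.
Lemma root_neq0 r : (2 <= r)%N -> (r.-1).-root (-1 : algC) != 0.
Proof.
move=> Hr; rewrite rootC_eq0 ?oppr_eq0 ?oner_eq0 //; lia.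
Qed.

Lemma tau_neq0 r : (2 <= r)%N -> tau r != 0.
Proof. by move=> Hr; rewrite /tau expf_neq0 // root_neq0. Qed.

Lemma tau_pow r : (2 <= r)%N -> tau r ^+ r.-1 = 1.
Proof.
move=> Hr; rewrite /tau -exprM mulnC exprM rootCK; last by lia.
by rewrite expr2 mulrNN mulr1.
Qed.

Lemma tau_dvd r (d : int) : (2 <= r)%N -> tau r ^ d = 1 -> ((r.-1)%:Z %| d)%Z.
Proof.
move=> Hr; case: d => [j|j] /= H.
  by rewrite dvdzE /=; apply: prim_rootN1 => //; lia.
rewrite dvdzE /=; apply: prim_rootN1; first by lia.
move: H; rewrite NegzE -invr_expz => /eqP; rewrite invr_eq1 => /eqP //.
Qed.

Lemma eqX (a1 a2 b1 b2 Nn Kk g : rat) : g != 0 ->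
  a1 * (Nn / g) + - b1 * (Kk / g) = a2 * (Nn / g) + - b2 * (Kk / g) ->
  a1 * Nn - b1 * Kk = a2 * Nn - b2 * Kk.
Proof.
move=> Hg E; apply: (mulIf (invr_neq0 Hg)).
transitivity (a1 * (Nn / g) + - b1 * (Kk / g)); first by ring.
by rewrite E; ring.
Qed.

Lemma eqY (h pm pl L M Nn K : rat) :
  (h - pm) * Nn - (L + M * Nn) * K = (h - pl) * Nn - L * K ->
  (pl - pm - M * K) * Nn = 0.
Proof.
move=> E; transitivity (((h - pm) * Nn - (L + M * Nn) * K) - ((h - pl) * Nn - L * K)).
  by ring.
by rewrite E subrr.
Qed.

Lemma compat_i n k r (lam mu : weight n) (i : 'I_n) : (2 <= r)%N ->
  tq k r (rho mu i) (mu i) = tq k r (rho lam i) (lam i) ->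
  exists m : int, mu i = lam i + m * (r.-1)%:Z /\
    (pos lam i)%:Z = (pos mu i)%:Z + m * (k.+1)%:Z.
Proof.
move=> Hr [E1 E2].
have Htau := tau_neq0 Hr.
have Hd : tau r ^ (mu i - lam i) = 1.
  rewrite expfzDr // !mul1r in E1 *; rewrite E1 -expfzDr // subrr //.
have [m Hm] : exists m, mu i - lam i = m * (r.-1)%:Z.
  by exists ((mu i - lam i) %/ (r.-1)%:Z)%Z; rewrite divzK // tau_dvd.
exists m; split; first by rewrite -Hm addrC subrK.
have Hg : ((gk k r)%:R : rat) != 0 by rewrite pnatr_eq0 -lt0n gcdn_gt0.
have E3 := eqX Hg E2.
rewrite /rho in E3.
have HN : ((r.-1)%:R : rat) != 0 by rewrite pnatr_eq0; lia.
have Hm' : ((mu i)%:~R : rat) = (lam i)%:~R + m%:~R * (r.-1)%:R.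
  by rewrite -[(r.-1)%:R]/((r.-1)%:Z%:~R) -rmorphM -rmorphD -Hm addrC subrK.
rewrite Hm' in E3.
have E4 := eqY E3.
have E5 : ((pos lam i)%:R - (pos mu i)%:R - m%:~R * (k.+1)%:R : rat) = 0.
  by apply/eqP; move: E4 => /eqP; rewrite mulf_eq0 (negbTE HN) orbF.
apply/eqP; rewrite -subr_eq0 -(intr_eq0 rat) -E5.
rewrite !rmorphB /= rmorphD rmorphM /=.
by rewrite opprD addrA.
Qed.

Lemma tq_neg k r a b a' b' : tq k r a b = tq k r a' b' -> tq k r (-a) (-b) = tq k r (-a') (-b').
Proof.
move=> [E1 E2]; rewrite /tq /mmul /t_pow /q_pow /=.
congr pair.
  by rewrite -!invr_expz; move: E1; rewrite !mul1r => ->.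
rewrite !rmorphN /= !mulNr !opprK.
move: E2; set X := (_ / _); set Y := (_ / _) => E2.
transitivity (- (a * X + - (b%:~R) * Y)); first by ring.
by rewrite E2; ring.
Qed.
Lemma stepRat (h pc pn vc vn sR wR K Nn g : rat) : pn = pc + 1 - wR * K ->
  sR = vc - vn + wR * Nn ->
  - (h - pn) * (Nn / g) + - (- vn) * (K / g) =
  (- (h - pc) * (Nn / g) + - (- vc) * (K / g)) + 1 * (Nn / g) + - sR * (K / g).
Proof. by move=> -> ->; ring. Qed.

Lemma stepOK n k r (nu : weight n) (cur nxt : 'I_n) (w s : nat) : (2 <= r)%N ->
  (pos nu nxt)%:Z = (pos nu cur)%:Z + 1 - (w * k.+1)%:Z ->
  (s%:Z) = nu cur - nu nxt + (w * r.-1)%:Z ->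
  u_lam k r nu nxt = mmul (mmul (u_lam k r nu cur) (t_pow k r 1)) (q_pow k r (s%:Z)).
Proof.
move=> Hr Hp Hs; rewrite /u_lam /tq /mmul /t_pow /q_pow /=.
congr pair.
  have Htau := tau_neq0 Hr.
  have -> : - nu nxt = (- nu cur + s%:Z) + - (w * r.-1)%:Z by rewrite Hs; ring.
  have Hw : tau r ^ (- (w * r.-1)%:Z) = 1.
    rewrite -invr_expz.
    have -> : tau r ^ (w * r.-1)%:Z = 1.
      by change (tau r ^+ (w * r.-1) = 1); rewrite mulnC exprM tau_pow // expr1n.
    by rewrite invr1.
  by rewrite !mul1r mulr1 expfzDr // expfzDr // Hw mulr1.
have Hp' : ((pos nu nxt)%:R : rat) = (pos nu cur)%:R + 1 - w%:R * (k.+1)%:R.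
  have := congr1 (fun z : int => (z%:~R : rat)) Hp; rewrite /= rmorphB rmorphD /=.
  by move=> H; rewrite -natrM; exact: H.
have Hs' : (s%:R : rat) = (nu cur)%:~R - (nu nxt)%:~R + w%:R * (r.-1)%:R.
  have := congr1 (fun z : int => (z%:~R : rat)) Hs; rewrite /= rmorphD rmorphB /=.
  by move=> H; rewrite -natrM; exact: H.
rewrite /rho !rmorphN /=.
rewrite -/(pos nu nxt) -/(pos nu cur).
have -> : (s%:~R : rat) = s%:R by [].
apply: stepRat; [exact: Hp' | exact: Hs'].
Qed.
Section WheelCons.
Variables (n k r : nat) (nu : weight n).
Hypothesis Hr : (2 <= r)%N.

Lemma win_wheel P : Win nu r.-1 k P -> exists w : (k.+1).-tuple 'I_n,
  w \in wheels k r nu /\ (forall x, x \in w -> (pos nu x <= P)%N) /\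
  (exists x, x \in w /\ pos nu x = P).
Proof.
case=> a [b [Ha [Hb Hab]]].
have HP : (P < n)%N by rewrite -Hb pos_ltn.
have HkP : (k <= P)%N by lia.
pose y h := odflt b [pick j | pos nu j == h].
have Hy : forall h, (h < n)%N -> pos nu (y h) = h.
  move=> h Hh; rewrite /y; case: pickP => [j /eqP //| H].
  by have [i Hi] := pos_surj nu Hh; have := H i; rewrite Hi eqxx.
have Hya : y (P - k)%N = a.
  by apply: (@pos_inj _ nu); rewrite Hy; lia.
have Hyb : y P = b by apply: (@pos_inj _ nu); rewrite Hy.
have Hmono : forall h1 h2, (h1 < h2 < n)%N -> lt2 (nu (y h1)) (y h1) (nu (y h2)) (y h2).
  move=> h1 h2 H12; apply: pos_lt_lt2; rewrite !Hy; lia.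
have [o [Hok Ho]] : exists o, (o <= k)%N /\
    ((o = 0%N /\ nu a - nu b < (r.-1)%:Z) \/
     ((1 <= o)%N /\ nu (y (P - k + o)%N) < nu (y (P - k + o.-1)%N))).
  case: (ltrP (nu a - nu b) (r.-1)%:Z) => Hc.
    by exists 0%N; split => //; left.
  move/lt2P: Hab => Hab.
  have Hab' : nu a = nu b + (r.-1)%:Z /\ (b < a)%N by lia.
  suff [x0 [Hx0 Hx0']] : exists x0, (x0 < k)%N /\ nu (y (P - k + x0.+1)%N) < nu (y (P - k + x0)%N).
    by exists x0.+1; split => //; right; split.
  apply: contrapT => Hn.
  have Heq : forall x, (x <= k)%N -> nu (y (P - k + x)%N) = nu a.
    elim=> [|x IH] Hx; first by rewrite addn0 Hya.
    have H1 := Hmono (P - k + x)%N (P - k + x.+1)%N ltac:(lia).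
    move/lt2P: H1 => H1.
    have H2 : ~ (nu (y (P - k + x.+1)%N) < nu (y (P - k + x)%N)).
      by move=> H2; apply: Hn; exists x; split => //; lia.
    rewrite -IH; last by lia.
    lia.
  have := Heq k (leqnn k); rewrite subnK // Hyb; lia.
pose L := (k.+1 - o)%N.
pose hh (x : nat) := if (x < L)%N then (o + x)%N else (x - L)%N.
pose F (x : nat) := y (P - k + hh x)%N.
have Hhh : forall x, (x < k.+1)%N -> (hh x <= k)%N.
  by move=> x Hx; rewrite /hh; case: ifP; lia.
have HFpos : forall x, (x < k.+1)%N -> pos nu (F x) = (P - k + hh x)%N.
  by move=> x Hx; rewrite /F Hy //; have := Hhh x Hx; lia.
pose w := [tuple F i | i < k.+1].
exists w; split; [|split].
- pose e (x : nat) := nu (F x) - nu (F x.+1) + ((x.+1 == L) * r.-1)%:Z.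
  have Hst : forall x, (x < k)%N ->
     [/\ (pos nu (F x.+1))%:Z = (pos nu (F x))%:Z + 1 - ((x.+1 == L) * k.+1)%:Z,
         0 <= e x & e x = 0 -> (F x < F x.+1)%N].
    move=> x Hx; rewrite /e; case: eqP => Hw /=.
    + have Hh1 : hh x = k by rewrite /hh ifT; lia.
      have Hh2 : hh x.+1 = 0%N by rewrite /hh ifF; lia.
      have HF1 : F x = b by rewrite /F Hh1 subnK.
      have HF2 : F x.+1 = a by rewrite /F Hh2 addn0.
      rewrite HF1 HF2 mul1n.
      move/lt2P: Hab => Hab.
      split; [lia | lia | move=> He; lia].
    + have Hh2 : hh x.+1 = (hh x).+1.
        by rewrite /hh; case: ifP; case: ifP; lia.
      have Hhx := Hhh x ltac:(lia). have Hhx1 := Hhh x.+1 ltac:(lia).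
      have HF2 : F x.+1 = y (P - k + (hh x).+1)%N by rewrite /F Hh2.
      rewrite HF2 /F mul0n.
      have H12 := Hmono (P - k + hh x)%N (P - k + (hh x).+1)%N ltac:(lia).
      move/lt2P: H12 => H12.
      rewrite !Hy; [split; [lia | lia | move=> He; lia] | lia | lia].
  rewrite inE; apply/asboolP; split.
    apply/tuple_uniqP => i j; rewrite !tnth_mktuple => HF.
    have := congr1 (pos nu) HF; rewrite !HFpos // => Hij.
    apply: ord_inj; move: (ltn_ord i) (ltn_ord j) Hij; rewrite /hh /L.
    by case: ifP => H1; case: ifP => H2 H3 H4 H5; lia.
  exists (fun a : 'I_k => `|e a|%N); split.
    have He_sum : forall K, (K <= k)%N -> \sum_(a < K) e a =
        nu (F 0%N) - nu (F K) + (((1 <= L <= K)%N : nat) * r.-1)%:Z.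
      elim=> [|K IH] HK.
        rewrite big_ord0 subrr add0r.
        by have -> : (1 <= L <= 0)%N = false by rewrite /L; lia.
      rewrite big_ord_recr /= IH; last by lia.
      have Hbb : ((1 <= L <= K.+1)%N : nat) = (((1 <= L <= K)%N : nat) + (K.+1 == L))%N.
        rewrite /L; case: (leqP (k.+1 - o) K) => H1; case: eqP => H2;
          rewrite ?andbT ?andbF /=; lia.
      rewrite Hbb mulnDl PoszD /e; ring.
    have Hcast : ((\sum_(a < k) `|e a|%N)%N : int) = \sum_(a < k) e a.
      have -> : ((\sum_(a < k) `|e a|%N)%N : int) = \sum_(a < k) (`|e a|%N : int).
        by apply: (big_morph Posz PoszD).
      by apply: eq_bigr => x _; rewrite gez0_abs //; have [_ H _] := Hst x (ltn_ord x).
    suff Hfin : ((\sum_(a < k) `|e a|%N)%N : int) <= (r.-1)%:Z - 1.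
      move: Hfin; set S := (\sum_(a < k) _)%N; lia.
    rewrite Hcast He_sum //.
    case: Ho => [[Ho0 Hd]|[Ho1 Hd]].
      have -> : (1 <= L <= k)%N = false by rewrite /L Ho0; lia.
      have -> : F 0%N = a.
        rewrite /F /hh ifT; last by rewrite /L; lia.
        by rewrite Ho0 !addn0 Hya.
      have -> : F k = b.
        rewrite /F /hh /L Ho0 ifT; last by lia.
        by rewrite add0n subnK // Hyb.
      rewrite mul0n addr0; lia.
    have -> : (1 <= L <= k)%N = true by rewrite /L; lia.
    have -> : F 0%N = y (P - k + o)%N by rewrite /F /hh ifT ?addn0 //; rewrite /L; lia.
    have -> : F k = y (P - k + o.-1)%N.
      rewrite /F /hh ifF; last by rewrite /L; lia.
      by congr (y _); rewrite /L; lia.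
    rewrite mul1n; lia.
  move=> x /=; rewrite !tnth_mktuple /=.
  have [Hp He0 Hlt] := Hst x (ltn_ord x).
  have Hbump : bump 0 x = x.+1 by rewrite /bump leq0n add1n.
  rewrite Hbump; split.
    apply: stepOK => //; [exact: Hp | by rewrite gez0_abs].
  by move=> /eqP; rewrite absz_eq0 => /eqP; exact: Hlt.
- move=> x /tnthP [i ->]; rewrite tnth_mktuple HFpos //.
  have := Hhh i (ltn_ord i); lia.
- exists b; split; last exact: Hb.
  have Hi : (k - o < k.+1)%N by lia.
  apply/tnthP; exists (Ordinal Hi); rewrite tnth_mktuple /F /hh /=.
  have -> : (k - o < L)%N by rewrite /L; lia.
  by rewrite (_ : (P - k + (o + (k - o)))%N = P) ?Hyb //; lia.
Qed.
End WheelCons.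
Lemma two_win_sharp n k r (nu : weight n) P1 P2 : (2 <= r)%N ->
  Win nu r.-1 k P1 -> Win nu r.-1 k P2 -> P1 <> P2 -> (2 <= sharp k r nu)%N.
Proof.
move=> Hr.
wlog HP : P1 P2 / (P1 < P2)%N.
  move=> Hw W1 W2 Hne; case: (ltngtP P1 P2) => H.
  - exact: Hw W1 W2 Hne.
  - by apply: Hw W2 W1 _ => // E; apply: Hne.
  - by [].
move=> W1 W2 Hne.
have [w1 [Hw1 [Hle1 _]]] := win_wheel Hr W1.
have [w2 [Hw2 [_ [x [Hx Hpx]]]]] := win_wheel Hr W2.
pose C w := [set w' in wheels k r nu | rot_rel w w'].
have HC2 : w2 \in C w2.
  rewrite inE Hw2 /=; apply/existsP; exists ord0; by rewrite rot0.
have Hneq : C w1 != C w2.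
  apply/eqP => HC; have : w2 \in C w1 by rewrite HC.
  rewrite inE => /andP [_ /existsP [m /eqP Hm]].
  have : x \in rot m w1 by rewrite -Hm.
  rewrite mem_rot => /Hle1; lia.
rewrite /sharp; apply: leq_trans (_ : #|[set C w1; C w2]| <= _)%N.
  by rewrite cards2 Hneq.
apply: subset_leq_card; apply/subsetP => c; rewrite !inE => /orP [/eqP ->|/eqP ->].
  exact: imset_f.
exact: imset_f.
Qed.

Lemma wheels_ext n k r (lam mu : weight n) :
  (forall i, u_lam k r mu i = u_lam k r lam i) -> wheels k r mu = wheels k r lam.
Proof.
move=> Hu; apply/setP => w; rewrite !inE.
apply/idP/idP => /asboolP [Hun [s [Hs Ha]]]; apply/asboolP; split => //;
  exists s; split => // a; have := Ha a => /=; by rewrite !Hu.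
Qed.

Unset Implicit Arguments.

Theorem lemma4p7 (n k r : nat) (lam : weight n) :
  (1 <= k <= n - 1)%N -> (2 <= r)%N ->
  (sharp k r lam <= 1)%N ->
  forall mu : weight n, mu <> lam ->
  ~ (forall i : 'I_n, tq k r (rho mu i) (mu i) = tq k r (rho lam i) (lam i)).
Proof.
move=> Hk Hr Hsh mu Hne H.
have HN : (0 < r.-1)%N by lia.
pose m (i : 'I_n) := ((mu i - lam i) %/ (r.-1)%:Z)%Z.
have Hm : forall i, mu i = lam i + m i * (r.-1)%:Z /\
    (pos lam i)%:Z = (pos mu i)%:Z + m i * (k.+1)%:Z.
  move=> i; have [m0 [H1 H2]] := compat_i Hr (H i).
  have -> : m i = m0.
    rewrite /m H1 addrAC subrr add0r mulzK //; lia.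
  by [].
have Hu : forall i, u_lam k r mu i = u_lam k r lam i by move=> i; exact: tq_neg.
have Hshm : (sharp k r mu <= 1)%N by rewrite /sharp (wheels_ext Hu).
have OW : forall nu : weight n, (sharp k r nu <= 1)%N -> OneWin nu r.-1 k.
  move=> nu Hnu P1 P2 W1 W2; apply/eqP/negPn/negP => /eqP Hne'.
  by have := two_win_sharp Hr W1 W2 Hne'; lia.
have H0 := @partF n lam mu r.-1 k m HN (fun i => (Hm i).1) (fun i => (Hm i).2) (OW _ Hsh) (OW _ Hshm).
apply: Hne; apply/ffunP => i; by rewrite (Hm i).1 H0 mul0r addr0.
Qed.
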